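(* Let $G$ be a finite simple graph with $n$ vertices and minimum degree $\delta$, and let $k$ be a positive integer. Then $\gamma_{gr}^{L,k}(G) \leq n-\delta+k$.
   Context: For a vertex $v$, $N(v)$ denotes its open neighborhood and $N[v]=N(v)\cup\{v\}$ its closed neighborhood. A sequence $S=(v_1,\ldots,v_m)$ of distinct vertices of $G$ is a $k$-$L$-sequence if for each $i\in[m]$ there exists a vertex $u_i\in N[v_i]$ such that the number of indices $j<i$ with $u_i\in N(v_j)$ is less than $k$. The $k$-$L$-Grundy domination number $\gamma_{gr}^{L,k}(G)$ is the maximum length of a $k$-$L$-sequence of $G$. *)

(* Defs.v *)
From mathcomp Require Import all_boot.
Set Implicit Arguments. Unset Strict Implicit. Unset Printing Implicit Defensive.

Definition simple_graph (T : finType) (e : rel T) : Prop :=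
  symmetric e /\ irreflexive e.

Definition opn (T : finType) (e : rel T) (v : T) : {set T} := [set u | e v u].
Definition cln (T : finType) (e : rel T) (v : T) : {set T} := v |: opn e v.

Definition deg (T : finType) (e : rel T) (v : T) : nat := #|opn e v|.

(* s = (v_1,...,v_m) is a k-L-sequence: its vertices are distinct, and for
   every position, writing s = s1 ++ v :: s2 (so s1 = (v_1,...,v_{i-1}) and
   v = v_i), there is u in N[v] such that the number of earlier vertices v_j
   (j < i) with u in N(v_j) is less than k. *)
Definition kL_sequence (T : finType) (e : rel T) (k : nat) (s : seq T) : Prop :=
  uniq s /\
  forall (s1 : seq T) (v : T) (s2 : seq T), s = s1 ++ v :: s2 ->
    exists2 u, u \in cln e v & count (fun w => u \in opn e w) s1 < k.

(* Main.v *)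
Require Import Defs.
From mathcomp Require Import all_boot.
From mathcomp Require Import zify.

Theorem mainTheorem1 (T : finType) (e : rel T) (k delta : nat) :
  simple_graph e ->
  0 < k ->
  (forall v : T, delta <= deg e v) ->
  (exists v : T, deg e v = delta) ->
  forall s : seq T, kL_sequence e k s -> size s <= #|T| - delta + k.
Proof.
move=> [sym irr] k0 hmin _ s [us hs].
rewrite leqNgt; apply/negP => hlt.
set m := #|T| - delta + k in hlt.
case: s us hs hlt => [|v0 s'] // us hs hlt.
have E : v0 :: s' = take m (v0 :: s') ++ nth v0 (v0 :: s') m :: drop m.+1 (v0 :: s').
  by rewrite -drop_nth // cat_take_drop.
have [u _ hc] := hs _ _ _ E.
set s1 := take m (v0 :: s') in E hc.
have sz : size s1 = m by rewrite size_takel // ltnW.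
have u1 : uniq s1 by rewrite take_uniq.
set p := (fun w => u \in opn e w) in hc.
have hC := count_predC p s1.
have hle : count (predC p) s1 <= #|~: opn e u|.
  rewrite -size_filter -(card_uniqP _) ?filter_uniq //.
  apply: subset_leq_card; apply/subsetP => w.
  rewrite mem_filter /= /p !inE => /andP [] + _.
  by rewrite sym.
have hcs := cardsC (opn e u).
have hd := hmin u.
rewrite /deg in hd.
lia.
Qed.
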